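(* If $i:A\to B$ is a seminormalization of a monoid $A$ and $f:A\to C$ is any monoid map with $C$ seminormal, then there is a unique monoid map $g:B\to C$ with $g\circ i=f$. In particular, a seminormalization of a monoid is unique up to unique isomorphism.
   Context: A monoid is a pointed commutative monoid (basepoint $0$ with $0\cdot a=0$, identity $1$); maps preserve $0$, $1$, multiplication. $A$ is reduced if $a^2=b^2$ and $a^3=b^3$ imply $a=b$; $A_{\mathrm{red}}$ is the quotient of $A$ by the congruence $a\sim b$ iff $a^n=b^n$ for all $n\gg0$. $A$ is seminormal if it is reduced and whenever $x^3=y^2$ there is $z\in A$ with $x=z^2$, $y=z^3$. A seminormalization of $A$ is a map $A\to B$ with $B$ seminormal such that $A_{\mathrm{red}}\to B$ is injective and for every $b\in B$, $b^n\in A_{\mathrm{red}}$ for all $n\gg0$. *)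

(* Defs.v *)
From Stdlib Require Import Arith.

Record pmonoid := PMonoid {
  carrier :> Type;
  mul : carrier -> carrier -> carrier;
  one : carrier;
  zero : carrier;
  mulA : forall a b c, mul a (mul b c) = mul (mul a b) c;
  mulC : forall a b, mul a b = mul b a;
  mul1m : forall a, mul one a = a;
  mul0m : forall a, mul zero a = zero
}.

Arguments mul {_} _ _.
Arguments one {_}.
Arguments zero {_}.

Fixpoint mpow {A : pmonoid} (a : A) (n : nat) : A :=
  match n with
  | 0 => one
  | S k => mul a (mpow a k)
  end.

Definition is_hom {A B : pmonoid} (f : A -> B) : Prop :=
  f zero = zero /\ f one = one /\ (forall a b, f (mul a b) = mul (f a) (f b)).

(* a ~ b  iff  a^n = b^n for all n >> 0 (the congruence defining A_red) *)
Definition red_equiv {A : pmonoid} (a b : A) : Prop :=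
  exists N, forall n, N <= n -> mpow a n = mpow b n.

Definition reduced (A : pmonoid) : Prop :=
  forall a b : A, mpow a 2 = mpow b 2 -> mpow a 3 = mpow b 3 -> a = b.

Definition seminormal (A : pmonoid) : Prop :=
  reduced A /\
  forall x y : A, mpow x 3 = mpow y 2 ->
    exists z : A, x = mpow z 2 /\ y = mpow z 3.

(* i : A -> B is a seminormalization: i is a monoid map, B is seminormal,
   the induced map A_red -> B is injective (i a = i b only if a ~ b), and
   every b in B has b^n in (the image of) A_red for all n >> 0. *)
Definition seminormalization {A B : pmonoid} (i : A -> B) : Prop :=
  is_hom i /\ seminormal B /\
  (forall a a' : A, i a = i a' -> red_equiv a a') /\
  (forall b : B, exists N, forall n, N <= n -> exists a : A, i a = mpow b n).

Definition is_iso {B C : pmonoid} (g : B -> C) : Prop :=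
  is_hom g /\ exists h : C -> B, is_hom h /\
    (forall b, h (g b) = b) /\ (forall c, g (h c) = c).

(* Main.v *)
Require Import Defs.
From Stdlib Require Import Arith Lia ClassicalEpsilon.

Lemma mpow_add {A : pmonoid} (x : A) n m : mpow x (n+m) = mul (mpow x n) (mpow x m).
Proof. induction n; simpl. - now rewrite mul1m. - now rewrite IHn, mulA. Qed.

Lemma mul_4 {A : pmonoid} (a b c d : A) : mul (mul a b) (mul c d) = mul (mul a c) (mul b d).
Proof.
  rewrite <- (mulA _ a b (mul c d)), (mulA _ b c d), (mulC _ b c), <- (mulA _ c b d), mulA.
  reflexivity.
Qed.

Lemma mpow_mul {A : pmonoid} (x y : A) n : mpow (mul x y) n = mul (mpow x n) (mpow y n).
Proof. induction n; simpl. - now rewrite mul1m. - now rewrite IHn, mul_4. Qed.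

Lemma mpow_mpow {A : pmonoid} (x : A) m k : mpow (mpow x m) k = mpow x (m*k).
Proof.
  induction k; simpl. - now rewrite Nat.mul_0_r.
  - rewrite IHk, Nat.mul_succ_r, mpow_add, mulC. reflexivity.
Qed.

Lemma mpow_zero {A : pmonoid} n : 1 <= n -> mpow (@zero A) n = zero.
Proof. destruct n; simpl; [lia|]. intros; apply mul0m. Qed.

Lemma mpow_one {A : pmonoid} n : mpow (@one A) n = one.
Proof. induction n; simpl; [reflexivity|]. now rewrite IHn, mul1m. Qed.

Lemma mpow1 {A : pmonoid} (x : A) : mpow x 1 = x.
Proof. simpl. now rewrite mulC, mul1m. Qed.

Lemma hom_mpow {A B : pmonoid} (f : A -> B) x n : is_hom f -> f (mpow x n) = mpow (f x) n.
Proof.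
  intros [f0 [f1 fm]]. induction n; simpl. - exact f1. - now rewrite fm, IHn.
Qed.

Lemma red_lemma {C : pmonoid} : reduced C -> forall (x y : C) N,
  (forall n, N <= n -> mpow x n = mpow y n) -> x = y.
Proof.
  intros Hred x y N H.
  assert (K : forall k, (forall n, S k <= n -> mpow x n = mpow y n) -> x = y).
  { induction k; intro H'.
    - rewrite <- (mpow1 x), <- (mpow1 y). apply H'; lia.
    - apply IHk. intros n Hn. destruct (Nat.eq_dec n (S k)).
      + subst. apply Hred; rewrite !mpow_mpow; apply H'; lia.
      + apply H'; lia. }
  apply (K N). intros n Hn; apply H; lia.
Qed.

Definition mult {C : pmonoid} (N : nat) (e : nat -> C) :=
  forall n m, N <= n -> N <= m -> mul (e n) (e m) = e (n+m).

Lemma mult_pow {C : pmonoid} N (e : nat -> C) n : mult N e -> N <= n ->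
  forall k, mpow (e n) (S k) = e (n * S k).
Proof.
  intros H Hn. induction k.
  - now rewrite mpow1, Nat.mul_1_r.
  - change (mpow (e n) (S (S k))) with (mul (e n) (mpow (e n) (S k))).
    rewrite IHk, H by nia. f_equal. nia.
Qed.

Lemma descend {C : pmonoid} : seminormal C -> forall M (e : nat -> C), 1 <= M ->
  mult (S M) e -> exists e', mult M e' /\ forall n, S M <= n -> e' n = e n.
Proof.
  intros [Hred Hsn] M e HM He.
  assert (H3 : mpow (e (2*M)) 3 = mpow (e (3*M)) 2).
  { rewrite (mult_pow _ _ _ He) by lia. rewrite (mult_pow _ _ _ He) by lia.
    f_equal; lia. }
  destruct (Hsn _ _ H3) as [z [Hz2 Hz3]].
  assert (Key : forall m, S M <= m -> mul z (e m) = e (M + m)).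
  { intros m Hm. apply Hred.
    - rewrite mpow_mul, <- Hz2.
      rewrite (mult_pow _ _ m He) by lia. rewrite (mult_pow _ _ (M+m) He) by lia.
      rewrite He by nia. f_equal; lia.
    - rewrite mpow_mul, <- Hz3.
      rewrite (mult_pow _ _ m He) by lia. rewrite (mult_pow _ _ (M+m) He) by lia.
      rewrite He by nia. f_equal; lia. }
  exists (fun n => if Nat.eqb n M then z else e n). split.
  - intros n m Hn Hm.
    destruct (Nat.eqb_spec n M), (Nat.eqb_spec m M), (Nat.eqb_spec (n+m) M); try lia.
    + subst. transitivity (mpow z 2).
      * simpl. now rewrite (mulC _ z one), mul1m.
      * rewrite <- Hz2. f_equal; lia.
    + subst. apply Key; lia.
    + subst. rewrite mulC, Nat.add_comm. apply Key; lia.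
    + apply He; lia.
  - intros n Hn. destruct (Nat.eqb_spec n M); [lia|reflexivity].
Qed.

Lemma root {C : pmonoid} : seminormal C -> forall N (e : nat -> C),
  mult (S N) e -> exists c, forall n, S N <= n -> mpow c n = e n.
Proof.
  intros Hs N. induction N; intros e He.
  - exists (e 1). intros n Hn. induction n; [lia|].
    destruct n. + apply mpow1.
    + change (mpow (e 1) (S (S n))) with (mul (e 1) (mpow (e 1) (S n))).
      rewrite IHn by lia. rewrite He by lia. reflexivity.
  - destruct (descend Hs (S N) e) as [e' [H1 H2]]; [lia|exact He|].
    destruct (IHN e' H1) as [c Hc]. exists c. intros n Hn.
    rewrite Hc by lia. apply H2; lia.
Qed.

Definition P {A B C : pmonoid} (i : A -> B) (f : A -> C) (b : B) (c : C) :=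
  exists N, forall n, N <= n -> forall a, i a = mpow b n -> f a = mpow c n.

Section Main.
Variables (A B C : pmonoid) (i : A -> B) (f : A -> C).
Hypotheses (Hsn : seminormalization i) (Hf : is_hom f) (HC : seminormal C).

Lemma compat a a' : i a = i a' -> f a = f a'.
Proof.
  intro H. destruct Hsn as [_ [_ [Hinj _]]]. destruct (Hinj _ _ H) as [N HN].
  apply (red_lemma (proj1 HC) _ _ N). intros n Hn.
  rewrite <- !hom_mpow by exact Hf. now rewrite HN.
Qed.

Lemma P_exists b : exists c, P i f b c.
Proof.
  destruct Hsn as [Hi [HB [Hinj Hsurj]]]. destruct (Hsurj b) as [N HN].
  assert (Hx : forall n, exists a, N <= n -> i a = mpow b n).
  { intro n; destruct (le_lt_dec N n) as [l|l].
    - destruct (HN n l) as [a Ha]; exists a; auto.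
    - exists one; intro; lia. }
  set (afun := fun n => epsilon (inhabits one) (fun a => N <= n -> i a = mpow b n)).
  assert (Ha : forall n, N <= n -> i (afun n) = mpow b n).
  { intros n. exact (epsilon_spec (inhabits one) _ (Hx n)). }
  destruct Hi as [i0 [i1 im]]. destruct Hf as [f0 [f1 fm]].
  assert (He : mult (S N) (fun n => f (afun n))).
  { intros n m Hn Hm. rewrite <- fm. apply compat.
    rewrite im, !Ha by lia. now rewrite mpow_add. }
  destruct (root HC N _ He) as [c Hc]. exists c, (S N).
  intros n Hn a Hia. rewrite Hc by lia. apply compat. rewrite Hia, Ha by lia. reflexivity.
Qed.

Lemma P_unique b c c' : P i f b c -> P i f b c' -> c = c'.
Proof.
  intros [N1 H1] [N2 H2]. destruct Hsn as [_ [_ [_ Hsurj]]].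
  destruct (Hsurj b) as [N0 HN0].
  apply (red_lemma (proj1 HC) _ _ (N1 + N2 + N0)). intros n Hn.
  destruct (HN0 n) as [a Ha]; [lia|].
  rewrite <- (H1 n ltac:(lia) a Ha), <- (H2 n ltac:(lia) a Ha).
  reflexivity.
Qed.

Definition gdef (b : B) : C := epsilon (inhabits one) (P i f b).

Lemma Hg b : P i f b (gdef b).
Proof. exact (epsilon_spec (inhabits one) _ (P_exists b)). Qed.

Lemma Pg_eq b c : P i f b c -> gdef b = c.
Proof. intro H. exact (P_unique _ _ _ (Hg b) H). Qed.

Lemma part1 : exists g : B -> C,
        is_hom g /\ (forall a, g (i a) = f a) /\
        (forall g' : B -> C, is_hom g' -> (forall a, g' (i a) = f a) ->
           forall b, g' b = g b).
Proof.
  pose proof Hsn as [Hi [HB [Hinj Hsurj]]].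
  pose proof Hi as [i0 [i1 im]]. pose proof Hf as [f0 [f1 fm]].
  exists gdef. split; [split; [|split]|split].
  - apply Pg_eq. exists 1. intros n Hn a Ha. rewrite (mpow_zero (A:=B)) in Ha by lia. rewrite (mpow_zero (A:=C)) by lia.
    rewrite <- f0. apply compat. now rewrite Ha, i0.
  - apply Pg_eq. exists 0. intros n Hn a Ha. rewrite (mpow_one (A:=B)) in Ha. rewrite (mpow_one (A:=C)).
    rewrite <- f1. apply compat. now rewrite Ha, i1.
  - intros b1 b2. apply Pg_eq.
    destruct (Hg b1) as [N1 H1], (Hg b2) as [N2 H2].
    destruct (Hsurj b1) as [M1 K1], (Hsurj b2) as [M2 K2].
    exists (N1+N2+M1+M2). intros n Hn a Ha.
    destruct (K1 n) as [a1 Ha1]; [lia|]. destruct (K2 n) as [a2 Ha2]; [lia|].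
    transitivity (f (mul a1 a2)).
    + apply compat. now rewrite Ha, im, Ha1, Ha2, mpow_mul.
    + rewrite fm, mpow_mul, (H1 n ltac:(lia) a1 Ha1), (H2 n ltac:(lia) a2 Ha2).
      reflexivity.
  - intro a. apply Pg_eq. exists 0. intros n _ a' Ha'.
    rewrite <- (hom_mpow f) by exact Hf. apply compat.
    rewrite Ha', (hom_mpow i) by exact Hi. reflexivity.
  - intros g' Hg' Hgi b. symmetry. apply Pg_eq.
    destruct (Hsurj b) as [N HN]. exists N. intros n Hn a Ha.
    rewrite <- Hgi, Ha. apply hom_mpow; exact Hg'.
Qed.

End Main.

Theorem lemma1p11 :
  (forall (A B C : pmonoid) (i : A -> B) (f : A -> C),
      seminormalization i -> is_hom f -> seminormal C ->
      exists g : B -> C,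
        is_hom g /\ (forall a, g (i a) = f a) /\
        (forall g' : B -> C, is_hom g' -> (forall a, g' (i a) = f a) ->
           forall b, g' b = g b))
  /\
  (forall (A B1 B2 : pmonoid) (i1 : A -> B1) (i2 : A -> B2),
      seminormalization i1 -> seminormalization i2 ->
      exists g : B1 -> B2,
        is_iso g /\ (forall a, g (i1 a) = i2 a) /\
        (forall g' : B1 -> B2, is_iso g' -> (forall a, g' (i1 a) = i2 a) ->
           forall b, g' b = g b)).
Proof.
  split.
  - intros. apply part1; assumption.
  - intros A B1 B2 i1 i2 H1 H2.
    pose proof H1 as [Hi1 [HB1 _]]. pose proof H2 as [Hi2 [HB2 _]].
    destruct (part1 _ _ _ i1 i2 H1 Hi2 HB2) as [g12 [Hh12 [Hc12 Hu12]]].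
    destruct (part1 _ _ _ i2 i1 H2 Hi1 HB1) as [g21 [Hh21 [Hc21 Hu21]]].
    destruct (part1 _ _ _ i1 i1 H1 Hi1 HB1) as [g11 [_ [_ Hu11]]].
    destruct (part1 _ _ _ i2 i2 H2 Hi2 HB2) as [g22 [_ [_ Hu22]]].
    assert (Hid : forall (X : pmonoid), is_hom (fun x : X => x)).
    { intros; repeat split. }
    assert (Hcomp : forall (X Y Z : pmonoid) (u : X -> Y) (v : Y -> Z),
               is_hom u -> is_hom v -> is_hom (fun x => v (u x))).
    { intros X Y Z u v [u0 [u1 um]] [v0 [v1 vm]]. repeat split.
      - now rewrite u0, v0. - now rewrite u1, v1. - intros; now rewrite um, vm. }
    exists g12. split; [split; [exact Hh12|]|split; [exact Hc12|]].
    + exists g21. split; [exact Hh21|split].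
      * intro b. rewrite (Hu11 (fun x => g21 (g12 x))) by
          (try apply Hcomp; try assumption; intro a; now rewrite Hc12, Hc21).
        symmetry. apply (Hu11 (fun x => x)); [apply Hid|reflexivity].
      * intro c. rewrite (Hu22 (fun x => g12 (g21 x))) by
          (try apply Hcomp; try assumption; intro a; now rewrite Hc21, Hc12).
        symmetry. apply (Hu22 (fun x => x)); [apply Hid|reflexivity].
    + intros g' [Hg' _] Hc b. apply Hu12; assumption.
Qed.
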